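(* For every $h>0$, $$\widetilde\psi(h):=\inf_{b_1,b_2>0}\big\{-(b_1+b_2)\ln(1-p)+\psi(h,b_1,b_2)\big\}=\big(\kappa_\ell(p)+\kappa_r(p)\big)h.$$
   Context: Setting: $(\omega_x^+)_{x\in\mathbb{Z}}$ i.i.d. with law $\mu$, $\omega_x^+\in[\varepsilon_0,1-\varepsilon_0]$ for some $\varepsilon_0>0$, $\omega_x^-=1-\omega_x^+$, $\rho_i=\omega_i^-/\omega_i^+$, $\mathbf{E}$ expectation under $\mu$; strict nestling: $\inf\{a:\mu(\omega_0^+\le a)>0\}<1/2<\sup\{a:\mu(\omega_0^+\ge a)>0\}$; $p\in(0,1)$. $\psi(h,b_1,b_2)=\sup_{\lambda>0}\{\lambda h-b_2\ln\mathbf{E}(\rho_0^\lambda)\}+\sup_{\lambda>0}\{\lambda h-b_1\ln\mathbf{E}(\rho_0^{-\lambda})\}$. $\kappa_\ell(p)>0$ and $\kappa_r(p)>0$ are the unique positive solutions of $\mathbf{E}(\rho_0^{-\kappa_\ell})=\frac{1}{1-p}$ and $\mathbf{E}(\rho_0^{\kappa_r})=\frac{1}{1-p}$. *)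

(* Defs.v *)
From Stdlib Require Import Reals.
Open Scope R_scope.

(* The support interval [eps0, 1 - eps0] of the law mu of omega_0^+. *)
Definition inI (eps0 x : R) : Prop := eps0 <= x <= 1 - eps0.

Definition contI (eps0 : R) (f : R -> R) : Prop :=
  forall x, inI eps0 x -> continuity_pt f x.

(* A probability law mu on [eps0, 1-eps0], represented (Riesz-Markov) by its
   expectation functional E f = \int f dmu on continuous functions:
   linear, local (depends only on values on the interval), positive, E 1 = 1. *)
Record law_functional (eps0 : R) (E : (R -> R) -> R) : Prop := {
  lf_linear : forall (a b : R) (f g : R -> R), contI eps0 f -> contI eps0 g ->
      E (fun x => a * f x + b * g x) = a * E f + b * E g;
  lf_local : forall f g : R -> R, (forall x, inI eps0 x -> f x = g x) -> E f = E g;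
  lf_pos : forall f : R -> R, contI eps0 f -> (forall x, inI eps0 x -> 0 <= f x) ->
      0 <= E f;
  lf_one : E (fun _ => 1) = 1 }.

(* rho = omega^- / omega^+ as a function of omega^+ = w. *)
Definition rho (w : R) : R := (1 - w) / w.

(* Strict nestling: inf supp mu < 1/2 < sup supp mu, i.e.
   mu([eps0,a)) > 0 for some a < 1/2 and mu((a,1-eps0]) > 0 for some a > 1/2. *)
Definition strict_nestling (eps0 : R) (E : (R -> R) -> R) : Prop :=
  (exists a, a < 1/2 /\ exists f, contI eps0 f /\
      (forall x, inI eps0 x -> 0 <= f x) /\
      (forall x, inI eps0 x -> a <= x -> f x = 0) /\ 0 < E f) /\
  (exists a, 1/2 < a /\ exists f, contI eps0 f /\
      (forall x, inI eps0 x -> 0 <= f x) /\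
      (forall x, inI eps0 x -> x <= a -> f x = 0) /\ 0 < E f).

Definition psi_r_set (E : (R -> R) -> R) (h b : R) : R -> Prop :=
  fun y => exists l, 0 < l /\ y = l * h - b * ln (E (fun w => Rpower (rho w) l)).

Definition psi_l_set (E : (R -> R) -> R) (h b : R) : R -> Prop :=
  fun y => exists l, 0 < l /\ y = l * h - b * ln (E (fun w => Rpower (rho w) (- l))).

(* The set of finite values of -(b1+b2) ln(1-p) + psi(h,b1,b2), b1,b2 > 0.
   (Values where psi = +infinity, i.e. a sup is unbounded, do not affect the inf.) *)
Definition psitilde_set (E : (R -> R) -> R) (p h : R) : R -> Prop :=
  fun x => exists b1 b2 s2 s1, 0 < b1 /\ 0 < b2 /\
      is_lub (psi_r_set E h b2) s2 /\ is_lub (psi_l_set E h b1) s1 /\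
      x = - (b1 + b2) * ln (1 - p) + (s2 + s1).

Definition is_glb (S : R -> Prop) (m : R) : Prop :=
  (forall x, S x -> m <= x) /\ (forall m', (forall x, S x -> m' <= x) -> m' <= m).

(* Main.v *)
Require Import Defs.
From Stdlib Require Import Reals Lra.
Open Scope R_scope.

Lemma ln_le' x y : 0 < x -> x <= y -> ln x <= ln y.
Proof.
  intros Hx Hxy. destruct (Rle_lt_or_eq_dec _ _ Hxy) as [H|H].
  - left; apply ln_increasing; auto.
  - subst; lra.
Qed.

Lemma exp_le' x y : x <= y -> exp x <= exp y.
Proof.
  intros Hxy. destruct (Rle_lt_or_eq_dec _ _ Hxy) as [H|H].
  - left; apply exp_increasing; auto.
  - subst; lra.
Qed.

Lemma cont_exp_mul eps0 f l : contI eps0 f -> contI eps0 (fun w => exp (l * f w)).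
Proof.
  intros Hf x Hx.
  apply (continuity_pt_comp (fun w => l * f w) exp x).
  - apply (continuity_pt_scal f l x). apply Hf; auto.
  - apply derivable_continuous_pt, derivable_pt_exp.
Qed.

Lemma cont_mul eps0 f g : contI eps0 f -> contI eps0 g -> contI eps0 (fun w => f w * g w).
Proof.
  intros Hf Hg x Hx. apply (continuity_pt_mult f g x); auto.
Qed.

Lemma cont_phi eps0 : 0 < eps0 -> contI eps0 (fun w => ln (rho w)).
Proof.
  intros He x [H1 H2].
  assert (Hr : 0 < rho x). { unfold rho. apply Rdiv_lt_0_compat; lra. }
  apply (continuity_pt_comp rho ln x).
  - unfold rho. apply (continuity_pt_div (fun w => 1 - w) (fun w => w) x).
    + apply (continuity_pt_minus (fun _ => 1) (fun w => w) x).
      * apply continuity_pt_const. intros a b; reflexivity.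
      * apply derivable_continuous_pt, derivable_pt_id.
    + apply derivable_continuous_pt, derivable_pt_id.
    + lra.
  - apply derivable_continuous_pt. exists (/ rho x). apply derivable_pt_lim_ln; auto.
Qed.

Lemma cont_opp eps0 f : contI eps0 f -> contI eps0 (fun w => - f w).
Proof. intros Hf x Hx. apply (continuity_pt_opp f x); auto. Qed.

Lemma E_mono eps0 E f g : law_functional eps0 E -> contI eps0 f -> contI eps0 g ->
  (forall x, inI eps0 x -> g x <= f x) -> E g <= E f.
Proof.
  intros HE Hf Hg Hle.
  assert (H := lf_pos _ _ HE (fun x => 1 * f x + (-1) * g x)).
  rewrite (lf_linear _ _ HE 1 (-1) f g Hf Hg) in H.
  assert (0 <= 1 * E f + -1 * E g); [|lra].
  apply H.
  - intros x Hx. apply (continuity_pt_plus (fun x => 1 * f x) (fun x => -1 * g x) x).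
    + apply (continuity_pt_scal f 1 x); auto.
    + apply (continuity_pt_scal g (-1) x); auto.
  - intros x Hx. specialize (Hle x Hx). lra.
Qed.

Lemma tilt eps0 E phi k : law_functional eps0 E -> contI eps0 phi ->
  0 < E (fun w => exp (k * phi w)) ->
  forall l, E (fun w => exp (k * phi w)) *
     exp ((E (fun w => exp (k * phi w) * phi w) / E (fun w => exp (k * phi w))) * (l - k))
     <= E (fun w => exp (l * phi w)).
Proof.
  intros HE Hc HA l.
  set (A := E (fun w => exp (k * phi w))) in *.
  set (B := E (fun w => exp (k * phi w) * phi w)).
  set (g := B / A).
  set (m := g * (l - k)).
  assert (HK : contI eps0 (fun w => exp (k * phi w))) by (apply cont_exp_mul; auto).
  assert (HKp : contI eps0 (fun w => exp (k * phi w) * phi w)) by (apply cont_mul; auto).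
  assert (Hlow : E (fun w => (exp m * (1 - m)) * exp (k * phi w) + (exp m * (l - k)) * (exp (k * phi w) * phi w))
                 <= E (fun w => exp (l * phi w))).
  { apply (E_mono eps0); auto.
    - apply cont_exp_mul; auto.
    - intros x Hx. apply (continuity_pt_plus (fun w => (exp m * (1 - m)) * exp (k * phi w))
          (fun w => (exp m * (l - k)) * (exp (k * phi w) * phi w)) x).
      + apply (continuity_pt_scal (fun w => exp (k * phi w)) _ x); auto.
      + apply (continuity_pt_scal (fun w => exp (k * phi w) * phi w) _ x); auto.
    - intros x Hx.
      assert (Hs : exp (l * phi x) = exp (k * phi x) * exp ((l - k) * phi x)).
      { rewrite <- exp_plus. f_equal. ring. }
      assert (Hi := exp_ineq1_le ((l - k) * phi x - m)).
      assert (Hs2 : exp ((l - k) * phi x) = exp m * exp ((l - k) * phi x - m)).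
      { rewrite <- exp_plus. f_equal. ring. }
      rewrite Hs, Hs2.
      assert (Hkp := exp_pos (k * phi x)). assert (Hmp := exp_pos m).
      assert (0 <= exp (k * phi x) * exp m * (exp ((l - k) * phi x - m) - (1 + ((l - k) * phi x - m)))).
      { apply Rmult_le_pos; [|lra]. apply Rmult_le_pos; lra. }
      nra. }
  rewrite (lf_linear _ _ HE _ _ _ _ HK HKp) in Hlow.
  fold A B in Hlow.
  assert (HB : B = g * A) by (unfold g; field; lra).
  rewrite HB in Hlow.
  assert (Heq : exp m * (1 - m) * A + exp m * (l - k) * (g * A) = A * exp m).
  { unfold m. ring. }
  lra.
Qed.

Definition Sset (F : R -> R) (h b : R) : R -> Prop :=
  fun y => exists l, 0 < l /\ y = l * h - b * ln (F l).

Lemma key p k h F g : 0 < p < 1 -> 0 < k -> 0 < h -> F k = 1 / (1 - p) -> F 0 = 1 ->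
  (forall l, F k * exp (g * (l - k)) <= F l) ->
  (forall b s, is_lub (Sset F h b) s -> k * h + b * ln (1 - p) <= s) /\
  exists b, 0 < b /\ is_lub (Sset F h b) (k * h + b * ln (1 - p)).
Proof.
  intros Hp Hk Hh HFk HF0 Ht.
  assert (Hlnk : ln (F k) = - ln (1 - p)).
  { rewrite HFk. unfold Rdiv. rewrite Rmult_1_l. apply ln_Rinv. lra. }
  assert (HA : 1 < F k).
  { rewrite HFk. apply (Rmult_lt_reg_r (1 - p)); [lra|]. field_simplify; lra. }
  assert (Hg : 0 < g).
  { destruct (Rlt_or_le 0 g) as [H|H]; auto.
    exfalso. specialize (Ht 0). rewrite HF0 in Ht.
    assert (exp 0 <= exp (g * (0 - k))) by (apply exp_le'; nra).
    rewrite exp_0 in H0. nra. }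
  split.
  - intros b s [Hub _]. apply Hub. exists k. split; auto. rewrite Hlnk. ring.
  - exists (h / g). split. { apply Rdiv_lt_0_compat; auto. }
    split.
    + intros y [l [Hl ->]].
      assert (Hpos : 0 < F k * exp (g * (l - k))).
      { apply Rmult_lt_0_compat; [lra| apply exp_pos]. }
      assert (Hln : ln (F k * exp (g * (l - k))) <= ln (F l)) by (apply ln_le'; auto).
      rewrite ln_mult, ln_exp, Hlnk in Hln; [|lra|apply exp_pos].
      assert (Hb : 0 <= h / g) by (left; apply Rdiv_lt_0_compat; auto).
      assert (h / g * (- ln (1 - p) + g * (l - k)) <= h / g * ln (F l)) by
        (apply Rmult_le_compat_l; auto).
      assert (Heq : h / g * (- ln (1 - p) + g * (l - k)) = - (h / g) * ln (1 - p) + h * (l - k)).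
      { field. lra. }
      lra.
    + intros b Hb. apply Hb. exists k. split; auto. rewrite Hlnk. ring.
Qed.

Lemma lub_uniq' S a b : is_lub S a -> is_lub S b -> a = b.
Proof. intros [H1 H2] [H3 H4]. apply Rle_antisym; auto. Qed.

Theorem lemma3p2 (eps0 p kl kr : R) (E : (R -> R) -> R)
  (Heps : 0 < eps0) (HE : law_functional eps0 E) (Hnest : strict_nestling eps0 E)
  (Hp : 0 < p < 1)
  (Hkl : 0 < kl) (Hkl_eq : E (fun w => Rpower (rho w) (- kl)) = 1 / (1 - p))
  (Hkr : 0 < kr) (Hkr_eq : E (fun w => Rpower (rho w) kr) = 1 / (1 - p)) :
  forall h : R, 0 < h -> is_glb (psitilde_set E p h) ((kl + kr) * h).
Proof.
  intros h Hh.
  set (phr := fun w => ln (rho w)).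
  set (phl := fun w => - ln (rho w)).
  assert (Hcr : contI eps0 phr) by (apply cont_phi; auto).
  assert (Hcl : contI eps0 phl) by (apply cont_opp, cont_phi; auto).
  set (Fr := fun l => E (fun w => Rpower (rho w) l)).
  set (Fl := fun l => E (fun w => Rpower (rho w) (- l))).
  assert (HFr : forall l, Fr l = E (fun w => exp (l * phr w))) by reflexivity.
  assert (HFl : forall l, Fl l = E (fun w => exp (l * phl w))).
  { intros l. unfold Fl. apply (lf_local _ _ HE). intros x _. unfold Rpower, phl.
    f_equal. ring. }
  assert (H0r : Fr 0 = 1).
  { rewrite HFr. rewrite <- (lf_one _ _ HE). apply (lf_local _ _ HE). intros x _.
    rewrite Rmult_0_l. apply exp_0. }
  assert (H0l : Fl 0 = 1).
  { rewrite HFl. rewrite <- (lf_one _ _ HE). apply (lf_local _ _ HE). intros x _.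
    rewrite Rmult_0_l. apply exp_0. }
  assert (Hpos : 0 < 1 / (1 - p)) by (apply Rdiv_lt_0_compat; lra).
  assert (Hkr' : Fr kr = 1 / (1 - p)) by exact Hkr_eq.
  assert (Hkl' : Fl kl = 1 / (1 - p)) by exact Hkl_eq.
  assert (Pr : 0 < E (fun w => exp (kr * phr w))) by (rewrite <- HFr, Hkr'; auto).
  assert (Pl : 0 < E (fun w => exp (kl * phl w))) by (rewrite <- HFl, Hkl'; auto).
  assert (Htr0 := tilt eps0 E phr kr HE Hcr Pr).
  assert (Htl0 := tilt eps0 E phl kl HE Hcl Pl).
  set (gr := E (fun w => exp (kr * phr w) * phr w) / E (fun w => exp (kr * phr w))) in Htr0.
  set (gl := E (fun w => exp (kl * phl w) * phl w) / E (fun w => exp (kl * phl w))) in Htl0.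
  assert (Htr : forall l, Fr kr * exp (gr * (l - kr)) <= Fr l).
  { intro l. rewrite !HFr. apply Htr0. }
  assert (Htl : forall l, Fl kl * exp (gl * (l - kl)) <= Fl l).
  { intro l. rewrite !HFl. apply Htl0. }
  destruct (key p kr h Fr gr Hp Hkr Hh Hkr' H0r Htr) as [Kr1 [br [Hbr Kr2]]].
  destruct (key p kl h Fl gl Hp Hkl Hh Hkl' H0l Htl) as [Kl1 [bl [Hbl Kl2]]].
  split.
  - intros x [b1 [b2 [s2 [s1 [Hb1 [Hb2 [Hs2 [Hs1 ->]]]]]]]].
    specialize (Kr1 b2 s2 Hs2). specialize (Kl1 b1 s1 Hs1). lra.
  - intros m' Hm'. 
    assert (Hin : psitilde_set E p h (- (bl + br) * ln (1 - p) + ((kr * h + br * ln (1 - p)) + (kl * h + bl * ln (1 - p))))).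
    { exists bl, br, (kr * h + br * ln (1 - p)), (kl * h + bl * ln (1 - p)).
      repeat split; auto; try apply Kr2; try apply Kl2. }
    specialize (Hm' _ Hin). lra.
Qed.
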